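(* Let $X$ be a separable Banach space, $\mu_{\mathrm{prior}}$ a Borel probability measure on $X$, $\mathcal L^\dagger,\mathcal L^\Delta:X\to\mathbb R^d$ measurable with $\|\mathcal L^\dagger\|_{L^2(\mu_{\mathrm{prior}})},\|\mathcal L^\Delta\|_{L^2(\mu_{\mathrm{prior}})}<\infty$, $y\in\mathbb R^d$, and the noise density $\rho$ satisfy (N.1)–(N.3). Let $\mu^y(d\bar u)\propto\rho(y-\mathcal L^\dagger(\bar u))\mu_{\mathrm{prior}}(d\bar u)$ and $\mu^{\Delta,y}(d\bar u)\propto\rho(y-\mathcal L^\Delta(\bar u))\mu_{\mathrm{prior}}(d\bar u)$ (normalized probability measures). There is $C>0$ depending only on $\rho$ such that for every $p\in[1,\infty]$, $$\Big\|\frac{d\mu^{\Delta,y}}{d\mu_{\mathrm{prior}}}-\frac{d\mu^y}{d\mu_{\mathrm{prior}}}\Big\|_{L^p(\mu_{\mathrm{prior}})}\le C\|\mathcal L^\Delta-\mathcal L^\dagger\|_{L^p(\mu_{\mathrm{prior}})}\exp\big(2|y|_\Gamma^2+\|\mathcal L^\Delta\|_{L^2(\mu_{\mathrm{prior}})}^2+\|\mathcal L^\dagger\|_{L^2(\mu_{\mathrm{prior}})}^2\big).$$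
   Context: $|y|_\Gamma=\langle y,\Gamma^{-1}y\rangle^{1/2}$ for fixed symmetric positive definite $\Gamma$; for $F:X\to\mathbb R^d$, $\|F\|_{L^p(\mu_{\mathrm{prior}})}=(\int|F|_\Gamma^pd\mu_{\mathrm{prior}})^{1/p}$ ($\mu_{\mathrm{prior}}$-essential supremum for $p=\infty$); for scalar functions the absolute value replaces $|\cdot|_\Gamma$. Noise density $\rho>0$: (N.1) $\rho$ Lipschitz w.r.t. $|\cdot|_\Gamma$; (N.2) $\sup\rho<\infty$; (N.3) $\rho(y)\ge C^{-1}e^{-|y|_\Gamma^2/2}$. *)

(* Defs.v *)
From HB Require Import structures.
From mathcomp Require Import all_boot all_order all_algebra.
From mathcomp Require Import all_classical all_reals all_analysis.
Set Implicit Arguments. Unset Strict Implicit. Unset Printing Implicit Defensive.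
Import Order.TTheory GRing.Theory Num.Theory.
Import numFieldNormedType.Exports.
Local Open Scope classical_set_scope.
Local Open Scope ring_scope.

Notation borel X := (g_sigma_algebraType (@open X)).

Definition separable_space (X : topologicalType) : Prop :=
  exists D : set X, countable D /\ closure D = [set: X].

Definition spd_matrix (R : realType) (d : nat) (G : 'M[R]_d) : Prop :=
  G^T = G /\ forall v : 'rV[R]_d, v != 0 -> 0 < (v *m G *m v^T) 0 0.

Definition Gnorm (R : realType) (d : nat) (G : 'M[R]_d) (y : 'rV[R]_d) : R :=
  Num.sqrt ((y *m invmx G *m y^T) 0 0).

(* Noise assumptions (N.1)-(N.3), together with strict positivity rho > 0. *)
Definition noise_assumptions (R : realType) (d : nat) (G : 'M[R]_d)
    (rho : 'rV[R]_d -> R) : Prop :=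
  [/\ (forall y, 0 < rho y),
      (* (N.1) Lipschitz w.r.t. |.|_Gamma *)
      (exists L : R, forall a b, `|rho a - rho b| <= L * Gnorm G (a - b)),
      (* (N.2) bounded *)
      (exists M : R, forall y, rho y <= M) &
      (* (N.3) Gaussian lower bound *)
      (exists C : R, 0 < C /\ forall y, C^-1 * expR (- (Gnorm G y ^+ 2) / 2) <= rho y)].

(* Coordinatewise (equivalently Borel) measurability of F : X -> R^d. *)
Definition rv_measurable (dX : measure_display) (T : measurableType dX)
    (R : realType) (d : nat) (F : T -> 'rV[R]_d) : Prop :=
  forall i : 'I_d, measurable_fun [set: T] (fun x => F x 0 i).

Definition LpG (dX : measure_display) (T : measurableType dX) (R : realType)
    (d : nat) (G : 'M[R]_d) (mu : {measure set T -> \bar R}) (p : \bar R)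
    (F : T -> 'rV[R]_d) : \bar R :=
  Lnorm mu p (fun x => (Gnorm G (F x))%:E).

Definition post_density (dX : measure_display) (T : measurableType dX)
    (R : realType) (d : nat) (mu : {measure set T -> \bar R})
    (rho : 'rV[R]_d -> R) (L : T -> 'rV[R]_d) (y : 'rV[R]_d) : T -> R :=
  fun u => rho (y - L u) / fine (\int[mu]_x (rho (y - L x))%:E)%E.

(* Main.v *)
Require Import Defs.
From HB Require Import structures.
From mathcomp Require Import all_boot all_order all_algebra.
From mathcomp Require Import all_classical all_reals all_analysis.
From mathcomp Require Import ess_sup_inf measurable_realfun.
From mathcomp Require Import ring lra.
Import Order.TTheory GRing.Theory Num.Theory.
Import numFieldNormedType.Exports.
Local Open Scope classical_set_scope.
Local Open Scope ring_scope.
Definition qf {R : realType} {d : nat} (M : 'M[R]_d) (v : 'rV[R]_d) : R :=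
  (v *m M *m v^T) 0 0.

Lemma qfE {R : realType} {d : nat} (M : 'M[R]_d) (v : 'rV[R]_d) :
  qf M v = \sum_j (\sum_k v 0 k * M k j) * v 0 j.
Proof. by rewrite /qf !mxE; apply: eq_bigr => j _; rewrite !mxE. Qed.

Lemma qf_par {R : realType} {d : nat} (M : 'M[R]_d) (a b : 'rV[R]_d) :
  qf M (a - b) + qf M (a + b) = 2 * qf M a + 2 * qf M b.
Proof.
rewrite !qfE.
rewrite !mulr_sumr -!big_split /=; apply: eq_bigr => j _.
rewrite !mulr_suml !mulr_sumr -!big_split /=; apply: eq_bigr => k _.
rewrite !mxE; ring.
Qed.

Lemma qfN {R : realType} {d : nat} (M : 'M[R]_d) (v : 'rV[R]_d) :
  qf M (- v) = qf M v.
Proof.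
rewrite !qfE; apply: eq_bigr => j _; rewrite !mxE.
rewrite -mulrNN; congr (_ * _).
  by rewrite -sumrN; apply: eq_bigr => k _; rewrite !mxE mulNr opprK.
by rewrite opprK.
Qed.
Lemma spd_unit {R : realType} {d : nat} {G : 'M[R]_d} :
  spd_matrix G -> G \in unitmx.
Proof.
move=> [_ pos]; rewrite unitmxE unitfE; apply/negP => /det0P [v v0 vG].
by have := pos v v0; rewrite vG mul0mx mxE ltxx.
Qed.

Lemma qf_inv_ge0 {R : realType} {d : nat} (G : 'M[R]_d) (v : 'rV[R]_d) :
  spd_matrix G -> 0 <= qf (invmx G) v.
Proof.
move=> hG; have uG := spd_unit hG; case: hG => sym pos.
set w := v *m invmx G.
have vE : v = w *m G by rewrite /w -mulmxA mulVmx // mulmx1.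
have -> : qf (invmx G) v = (w *m G *m w^T) 0 0.
  by rewrite /qf -/w vE trmx_mul sym mulmxA.
have [->|w0] := eqVneq w 0; first by rewrite mul0mx mul0mx mxE.
exact/ltW/pos.
Qed.

Lemma Gnorm_sqr {R : realType} {d : nat} (G : 'M[R]_d) (v : 'rV[R]_d) :
  spd_matrix G -> Gnorm G v ^+ 2 = qf (invmx G) v.
Proof. by move=> hG; rewrite /Gnorm sqr_sqrtr // qf_inv_ge0. Qed.

Lemma GnormN {R : realType} {d : nat} (G : 'M[R]_d) (v : 'rV[R]_d) :
  Gnorm G (- v) = Gnorm G v.
Proof. by rewrite /Gnorm -/(qf _ _) qfN. Qed.

Lemma Gnorm_ge0 {R : realType} {d : nat} (G : 'M[R]_d) (v : 'rV[R]_d) :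
  0 <= Gnorm G v.
Proof. exact: sqrtr_ge0. Qed.

Lemma qf_sub_le {R : realType} {d : nat} (G : 'M[R]_d) (a b : 'rV[R]_d) :
  spd_matrix G ->
  qf (invmx G) (a - b) <= 2 * qf (invmx G) a + 2 * qf (invmx G) b.
Proof.
move=> hG; rewrite -qf_par lerDl; exact: qf_inv_ge0.
Qed.

Lemma qf_le_coord {R : realType} {d : nat} (M : 'M[R]_d) (v : 'rV[R]_d) (e : R) :
  (forall k, `|v 0 k| <= e) ->
  qf M v <= (\sum_j \sum_k `|M k j|) * e ^+ 2.
Proof.
move=> hv; rewrite qfE mulr_suml; apply: ler_sum => j _.
rewrite !mulr_suml; apply: ler_sum => k _.
have e0 : 0 <= e by apply: le_trans (hv k).
apply: le_trans (ler_norm _) _.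
rewrite !normrM expr2 mulrA [`|v 0 k| * _]mulrC.
apply: ler_pM; [by rewrite mulr_ge0|by []| |exact: hv].
by rewrite ler_pM.
Qed.

Lemma rv_meas_sub {dX} {T : measurableType dX} {R : realType} {d : nat}
  (F1 F2 : T -> 'rV[R]_d) :
  rv_measurable F1 -> rv_measurable F2 -> rv_measurable (fun x => F1 x - F2 x).
Proof.
move=> h1 h2 i.
rewrite (_ : (fun x => _) = (fun x => F1 x 0 i - F2 x 0 i)); last first.
  by apply: funext => x; rewrite !mxE.
exact: measurable_funB.
Qed.

Lemma rv_meas_cst {dX} {T : measurableType dX} {R : realType} {d : nat}
  (c : 'rV[R]_d) : rv_measurable (fun _ : T => c).
Proof. by move=> i; exact: measurable_cst. Qed.

Lemma meas_qf {dX} {T : measurableType dX} {R : realType} {d : nat}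
  (M : 'M[R]_d) (F : T -> 'rV[R]_d) :
  rv_measurable F -> measurable_fun setT (fun x => qf M (F x)).
Proof.
move=> hF.
rewrite (_ : (fun x => _) =
  (fun x => \sum_j ((\sum_k F x 0 k * M k j) * F x 0 j))); last first.
  by apply: funext => x; rewrite qfE.
apply: measurable_sum => j; apply: measurable_funM; last exact: hF.
apply: measurable_sum => k; apply: measurable_funM; first exact: hF.
exact: measurable_cst.
Qed.

Lemma meas_Gnorm {dX} {T : measurableType dX} {R : realType} {d : nat}
  (G : 'M[R]_d) (F : T -> 'rV[R]_d) :
  rv_measurable F -> measurable_fun setT (fun x => Gnorm G (F x)).
Proof.
move=> hF; apply: (measurableT_comp (continuous_measurable_fun (@sqrt_continuous R))).
exact: meas_qf.
Qed.

Lemma meas_lip {dX} {T : measurableType dX} {R : realType} {d : nat}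
  (G : 'M[R]_d) (phi : 'rV[R]_d -> R) (K : R) (F : T -> 'rV[R]_d) :
  spd_matrix G -> 0 <= K ->
  (forall a b, `|phi a - phi b| <= K * Gnorm G (a - b)) ->
  rv_measurable F -> measurable_fun setT (fun x => phi (F x)).
Proof.
move=> hG K0 hphi hF.
pose qn (n : nat) : 'rV[R]_d :=
  if @pickle_inv 'rV[rat]_d n is Some r then map_mx ratr r else 0.
pose h (n : nat) (x : T) := phi (qn n) + K * Gnorm G (F x - qn n).
have lb v n : phi v <= phi (qn n) + K * Gnorm G (v - qn n).
  have := hphi v (qn n); have := ler_norm (phi v - phi (qn n)). lra.
have mh n : measurable_fun setT (h n).
  apply: measurable_funD; first exact: measurable_cst.
  apply: measurable_funM; first exact: measurable_cst.
  by apply: meas_Gnorm; apply: rv_meas_sub => //; exact: rv_meas_cst.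
have key x : phi (F x) = infs (h ^~ x) 0.
  rewrite /infs /=; set E := sdrop _ _.
  have hE : has_lbound E.
    by exists (phi (F x)) => _ [k _ <-]; exact: lb.
  apply/le_anti/andP; split.
    apply: lb_le_inf; first by exists (h 0%N x), 0%N.
    by move=> _ [k _ <-]; exact: lb.
  apply/ler_addgt0Pr => e e0.
  set v := F x.
  set S := \sum_j \sum_k `|invmx G k j|.
  have S0 : 0 <= S by apply: sumr_ge0 => j _; apply: sumr_ge0 => k _.
  have [dl [dl0 edl]] : exists dl, 0 < dl /\ 2 * (K + 1) * (S + 1) * dl = e.
    exists (e / (2 * (K + 1) * (S + 1))); split.
      by rewrite divr_gt0 // !mulr_gt0 // ltr_wpDl.
    rewrite [LHS]mulrC divfK //.
    by rewrite gt_eqF // !mulr_gt0 // ltr_wpDl.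
  have /fin_all_exists [f hf] : forall i : 'I_d,
      exists q : rat, ratr q \in `](v 0 i - dl), (v 0 i + dl)[.
    by move=> i; apply: rat_in_itvoo; lra.
  pose rr : 'rV[rat]_d := \row_i f i.
  have qE : qn (pickle rr) = map_mx ratr rr by rewrite /qn pickleK_inv.
  set w := v - qn (pickle rr).
  have hw i : `|w 0 i| <= dl.
    have := hf i; rewrite in_itv /= /w qE !mxE => /andP[h1 h2].
    rewrite ler_norml; apply/andP; split; lra.
  have Gw : Gnorm G w <= (S + 1) * dl.
    rewrite /Gnorm -/(qf _ _).
    rewrite -(ger0_norm (_ : 0 <= (S + 1) * dl)); last by rewrite mulr_ge0 // ?ltW // ltr_wpDl.
    rewrite -sqrtr_sqr; apply: ler_wsqrtr.
    apply: (le_trans (qf_le_coord _ _ _ hw)).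
    rewrite exprMn; apply: ler_pM => //; [exact: sqr_ge0|rewrite -/S; nra].
  have Gw' : Gnorm G (qn (pickle rr) - v) = Gnorm G w by rewrite -GnormN opprB.
  have := lb (qn (pickle rr)) (pickle rr).
  have := hphi (qn (pickle rr)) v; rewrite Gw' => h1.
  have hinf : inf E <= h (pickle rr) x by apply: ge_inf => //; exists (pickle rr).
  have KG : K * Gnorm G w <= K * ((S + 1) * dl) by rewrite ler_wpM2l.
  have P : 0 <= (S + 1) * dl by rewrite mulr_ge0 // ?ltW // ltr_wpDl.
  move: hinf; rewrite /h -/w => hinf _.
  have := ler_norm (phi (qn (pickle rr)) - phi v).
  nra.
apply: (eq_measurable_fun (fun x => infs (h ^~ x) 0)).
  by move=> x _; rewrite key.
apply: measurable_fun_infs => // t _.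
by exists (phi (F t)) => _ [k _ <-]; exact: lb.
Qed.

Local Open Scope ereal_scope.

Lemma LnormE {dX} {T : measurableType dX} {R : realType}
  (mu : {measure set T -> \bar R}) (r : R) (f : T -> R) :
  Lnorm mu r%:E (fun x => (f x)%:E) = (\int[mu]_x ((`|f x| `^ r)%R%:E)) `^ r^-1.
Proof.
rewrite unlock /=; congr (_ `^ _).
Qed.

Lemma meas_powabs {dX} {T : measurableType dX} {R : realType} (r : R) (f : T -> R) :
  measurable_fun setT f ->
  measurable_fun setT (fun x => ((`|f x| `^ r)%R%:E)).
Proof.
move=> mf; apply/measurable_EFinP.
apply: (measurableT_comp (measurable_powR r)).
exact: (measurableT_comp (@normr_measurable R setT)).
Qed.

Lemma Lnorm_mono {dX} {T : measurableType dX} {R : realType}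
  (mu : probability T R) (p : \bar R) (f g : T -> R) :
  1 <= p -> measurable_fun setT f -> measurable_fun setT g ->
  (forall x, (`|f x| <= `|g x|)%R) ->
  Lnorm mu p (fun x => (f x)%:E) <= Lnorm mu p (fun x => (g x)%:E).
Proof.
case: p => [r||//] p1 mf mg fg.
- have r1 : (1 <= r)%R by rewrite -lee_fin.
  rewrite !LnormE; apply: gt0_ler_poweR.
  + by rewrite invr_ge0 (le_trans _ r1).
  + by rewrite in_itv /= leey andbT integral_ge0 // => x _; rewrite lee_fin powR_ge0.
  + by rewrite in_itv /= leey andbT integral_ge0 // => x _; rewrite lee_fin powR_ge0.
  apply: ge0_le_integral => //.
  + exact: meas_powabs.
  + exact: meas_powabs.
  + move=> x _; rewrite lee_fin; apply: ge0_ler_powR => //.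
    by rewrite (le_trans _ r1).
- rewrite unlock /=; case: ifPn => // _; apply: le_ess_sup.
  by apply: nearW => x /=; rewrite lee_fin.
Qed.

Lemma prob_gt0 {dX} {T : measurableType dX} {R : realType} (mu : probability T R) :
  0 < mu [set: T].
Proof. by rewrite probability_setT lte01. Qed.

Lemma powR_inv_pow {R : realType} (c r : R) : (0 <= c)%R -> (0 < r)%R ->
  ((c `^ r) `^ r^-1)%R = c.
Proof.
by move=> c0 r0; rewrite -powRrM mulfV ?gt_eqF // powRr1.
Qed.

Lemma Lnorm_scale {dX} {T : measurableType dX} {R : realType}
  (mu : probability T R) (p : \bar R) (c : R) (f : T -> R) :
  1 <= p -> (0 <= c)%R -> measurable_fun setT f ->
  Lnorm mu p (fun x => (c * f x)%R%:E) = c%:E * Lnorm mu p (fun x => (f x)%:E).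
Proof.
case: p => [r||//] p1 c0 mf.
- have r0 : (0 < r)%R by rewrite (lt_le_trans _ (_ : 1 <= r)%R) // -lee_fin.
  rewrite !LnormE.
  under eq_integral => x _ do
    rewrite normrM (ger0_norm c0) powRM // EFinM.
  rewrite ge0_integralZl //; try exact: meas_powabs;
    try (by move=> x _; rewrite lee_fin powR_ge0); try (by rewrite lee_fin powR_ge0).
  rewrite poweRM ?lee_fin ?powR_ge0 //; last first.
    by apply: integral_ge0 => x _; rewrite lee_fin powR_ge0.
  by rewrite poweR_EFin powR_inv_pow.
- rewrite unlock /= (prob_gt0 mu) -ess_supZl //; last exact: prob_gt0.
  apply: eq_ess_sup; apply: nearW => x /=.
  by rewrite normrM (ger0_norm c0) EFinM.
Qed.

Lemma Lnorm_cst {dX} {T : measurableType dX} {R : realType}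
  (mu : probability T R) (p : \bar R) (c : R) :
  1 <= p -> (0 <= c)%R -> Lnorm mu p (fun _ => c%:E) = c%:E.
Proof.
case: p => [r||//] p1 c0.
- have r0 : (0 < r)%R by rewrite (lt_le_trans _ (_ : 1 <= r)%R) // -lee_fin.
  rewrite LnormE integral_cst //.
  rewrite [X in (_ * X)%E](_ : _ = 1); last exact: probability_setT.
  rewrite mule1 poweR_EFin.
  by rewrite (ger0_norm c0) powR_inv_pow.
- rewrite unlock /= (prob_gt0 mu).
  rewrite (_ : _ \o _ = cst c%:E); first by rewrite ess_sup_cst // prob_gt0.
  by apply: funext => x /=; rewrite (ger0_norm c0).
Qed.

Lemma L1_le_Lp {dX} {T : measurableType dX} {R : realType}
  (mu : probability T R) (p : \bar R) (f : T -> R) :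
  1 <= p -> measurable_fun setT f -> (forall x, (0 <= f x)%R) ->
  \int[mu]_x (f x)%:E <= Lnorm mu p (fun x => (f x)%:E).
Proof.
case: p => [r||//] p1 mf f0.
- have r1 : (1 <= r)%R by rewrite -lee_fin.
  have [->|r1'] := eqVneq r 1%R.
    rewrite Lnorm1; rewrite le_eqVlt; apply/orP; left; apply/eqP.
    by apply: eq_integral => x _; rewrite abse_EFin ger0_norm.
  have r1s : (1 < r)%R by rewrite lt_neqAle eq_sym r1' r1.
  have r0 : (0 < r)%R by rewrite (lt_trans _ r1s).
  pose q := (r / (r - 1))%R.
  have q0 : (0 < q)%R by rewrite divr_gt0 // subr_gt0.
  have q1 : (1 <= q)%R.
    rewrite /q ler_pdivlMr ?subr_gt0 //; lra.
  have pq : (r^-1 + q^-1 = 1)%R.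
    by rewrite /q invf_div; field; rewrite gt_eqF.
  have H := hoelder mu mf (@measurable_cst _ _ T R setT 1%R) r0 q0 pq.
  rewrite (_ : Lnorm mu q%:E (EFin \o cst 1%R) = 1) ?mule1 in H; last first.
    by apply: (Lnorm_cst mu q%:E 1%R) => //; rewrite lee_fin.
  apply: le_trans H; rewrite Lnorm1; rewrite le_eqVlt; apply/orP; left; apply/eqP.
  by apply: eq_integral => x _ /=; rewrite mulr1 ger0_norm.
- rewrite unlock /= (prob_gt0 mu).
  set s := ess_sup _ _.
  have s0 : 0 <= s.
    by apply: ess_sup_gee; [exact: prob_gt0|apply: nearW => x /=].
  have hs := ess_sup_ge mu (abse \o (fun x => (f x)%:E)).
  have [->|soo] := eqVneq s +oo; first exact: leey.
  apply: (@le_trans _ _ (\int[mu]_x (cst s x))).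
    apply: ae_ge0_le_integral => //.
    + by move=> x _; rewrite lee_fin.
    + exact/measurable_EFinP.
    + by apply: filterS hs => x /= h _; rewrite (le_trans _ h) // lee_fin ler_norm.
  rewrite integral_cst //.
  by rewrite [X in (_ * X)%E](_ : _ = 1) ?mule1 //; exact: probability_setT.
Qed.

Local Close Scope ereal_scope.

Lemma integrable_bdd {dX} {T : measurableType dX} {R : realType}
  (mu : probability T R) (f : T -> R) (M : R) :
  measurable_fun setT f -> (forall x, (`|f x| <= M)%R) ->
  mu.-integrable setT (EFin \o f).
Proof.
move=> mf fM; apply/integrableP; split; first exact/measurable_EFinP.
apply: (@le_lt_trans _ _ (\int[mu]_x (cst M%:E x))%E).
  apply: ge0_le_integral => //.
  - by apply/measurableT_comp => //; exact/measurable_EFinP.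
  - by move=> x _ /=; rewrite ?abse_EFin lee_fin.
rewrite integral_cst // [X in (_ * X)%E](_ : _ = 1%E) ?mule1 ?ltry //.
exact: probability_setT.
Qed.

Lemma LpG2E {dX} {T : measurableType dX} {R : realType} {d : nat}
  (G : 'M[R]_d) (mu : probability T R) (L : T -> 'rV[R]_d) :
  spd_matrix G ->
  LpG G mu 2%:E L = ((\int[mu]_x (qf (invmx G) (L x))%:E) `^ (2^-1)%R)%E.
Proof.
move=> hG; rewrite /LpG LnormE; congr (_ `^ _)%E; apply: eq_integral => x _.
by rewrite ger0_norm ?Gnorm_ge0 // powR_mulrn ?Gnorm_ge0 // Gnorm_sqr.
Qed.

Lemma Z_lower {dX} {T : measurableType dX} {R : realType} {d : nat}
  (G : 'M[R]_d) (rho : 'rV[R]_d -> R) (M C0 : R)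
  (mu : probability T R) (L : T -> 'rV[R]_d) (y : 'rV[R]_d) :
  spd_matrix G -> (forall v, (0 < rho v)%R) -> (forall v, (rho v <= M)%R) ->
  (0 < C0)%R ->
  (forall v, (C0^-1 * expR (- (Gnorm G v ^+ 2) / 2) <= rho v)%R) ->
  measurable_fun setT (fun x => rho (y - L x)) -> rv_measurable L ->
  (LpG G mu 2%:E L < +oo)%E ->
  (\int[mu]_x (rho (y - L x))%:E)%E \is a fin_num /\
  (C0^-1 * expR (- (Gnorm G y ^+ 2 + fine (LpG G mu 2%:E L) ^+ 2))
     <= fine (\int[mu]_x (rho (y - L x))%:E)%E)%R.
Proof.
move=> hG rpos rM C00 hC0 mphi mL fin.
have iphi : mu.-integrable setT (EFin \o (fun x => rho (y - L x))).
  apply: (integrable_bdd _ _ M) => // x.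
  by rewrite ger0_norm ?rM // ltW.
have Zfin := integrable_fin_num measurableT iphi.
split => //.
pose g x := qf (invmx G) (L x).
have mg : measurable_fun setT g by exact: meas_qf.
have g0 x : (0 <= g x)%R by exact: qf_inv_ge0.
set I := (\int[mu]_x (g x)%:E)%E.
have I0 : (0 <= I)%E by apply: integral_ge0 => x _; rewrite lee_fin.
have Ifin : I \is a fin_num.
  rewrite ge0_fin_numE //; apply: (@lty_poweRy _ _ 2^-1); first by rewrite invr_neq0.
  by rewrite -LpG2E.
have NE : (fine (LpG G mu 2%:E L) ^+ 2 = fine I)%R.
  rewrite LpG2E // -/I -(fineK Ifin) poweR_EFin /= powR12_sqrt ?fine_ge0 //.
  by rewrite sqr_sqrtr // fine_ge0.
rewrite NE.
have ig : mu.-integrable setT (EFin \o g).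
  apply/integrableP; split; first exact/measurable_EFinP.
  rewrite (_ : (\int[mu]_x _)%E = I) ?ltey_eq ?Ifin //.
  by apply: eq_integral => x _ /=; rewrite ?abse_EFin ger0_norm.
set m := (- (Gnorm G y ^+ 2 + fine I))%R.
set c := (C0^-1 * expR m)%R.
have c0 : (0 <= c)%R by rewrite mulr_ge0 ?invr_ge0 ?ltW ?expR_gt0.
have pt x : (c * (1 + fine I) - c * g x <= rho (y - L x))%R.
  set t := (- (Gnorm G y ^+ 2 + g x))%R.
  have h1 : (expR m * (1 + (t - m)) <= expR t)%R.
    have -> : expR t = (expR m * expR (t - m))%R by rewrite -expRD addrC subrK.
    by rewrite ler_wpM2l ?expR_ge0 // expR_ge1Dx.
  have h2 : (t <= - (Gnorm G (y - L x) ^+ 2) / 2)%R.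
    have h := qf_sub_le G y (L x) hG.
    rewrite /t /g !Gnorm_sqr //; lra.
  apply: le_trans (hC0 (y - L x)).
  have -> : (c * (1 + fine I) - c * g x = C0^-1 * (expR m * (1 + (t - m))))%R.
    by rewrite /c /t /m; ring.
  apply: ler_wpM2l; first by rewrite invr_ge0 ltW.
  by apply: le_trans h1 _; rewrite ler_expR.
have ic : mu.-integrable setT (EFin \o cst (c * (1 + fine I))%R).
  exact: finite_measure_integrable_cst.
have icg : mu.-integrable setT (EFin \o (fun x => c * g x)%R).
  rewrite (_ : EFin \o _ = (fun x => c%:E * (EFin \o g) x)%E); last first.
    by apply: funext => x /=; rewrite EFinM.
  exact: integrableZl.
have ih : mu.-integrable setT (fun x => ((c * (1 + fine I))%:E - (c * g x)%:E)%E).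
  exact: integrableB.
have hint : (\int[mu]_x ((c * (1 + fine I))%:E - (c * g x)%:E))%E = c%:E.
  rewrite (integralB_EFin measurableT ic icg).
  rewrite (@integral_cst _ _ _ mu setT measurableT ((c * (1 + fine I))%:E)).
  rewrite [X in (_ * X)%E](_ : _ = 1%E) ?mule1; last exact: probability_setT.
  under eq_integral do rewrite EFinM.
  rewrite integralZl // -/I -(fineK Ifin) -EFinM -EFinB; congr EFin; ring.
have hle : (c%:E <= \int[mu]_x (rho (y - L x))%:E)%E.
  rewrite -hint; apply: le_integral => //.
  by move=> x _; rewrite lee_fin; exact: pt.
by rewrite -(fineK Zfin) lee_fin in hle.
Qed.

Lemma inv_bound {R : realType} (C0 a z : R) :
  0 < C0 -> C0^-1 * expR (- a) <= z -> 0 < z /\ z^-1 <= C0 * expR a.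
Proof.
move=> C00 hz.
have b0 : 0 < C0^-1 * expR (- a) by rewrite mulr_gt0 ?invr_gt0 ?expR_gt0.
have z0 : 0 < z by apply: lt_le_trans hz.
split => //.
have -> : C0 * expR a = (C0^-1 * expR (- a))^-1.
  by rewrite invfM invrK expRN invrK.
by rewrite lef_pV2 ?posrE.
Qed.

Lemma sub_sub_vec {R : realType} {d : nat} (y a b : 'rV[R]_d) :
  (y - a) - (y - b) = b - a.
Proof. by rewrite opprB addrC addrA subrK. Qed.

Theorem mainTheorem10 (R : realType) (d : nat) (G : 'M[R]_d)
    (rho : 'rV[R]_d -> R) :
  spd_matrix G -> noise_assumptions G rho ->
  exists C : R, 0 < C /\
  forall (X : completeNormedModType R), separable_space X ->
  forall (mu : probability (borel X) R) (Ldag LDelta : borel X -> 'rV[R]_d),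
  rv_measurable Ldag -> rv_measurable LDelta ->
  (LpG G mu 2%:E Ldag < +oo)%E -> (LpG G mu 2%:E LDelta < +oo)%E ->
  forall (y : 'rV[R]_d) (p : \bar R), (1 <= p)%E ->
  (Lnorm mu p (fun u => (`| post_density mu rho LDelta y u
                           - post_density mu rho Ldag y u |)%R%:E)
   <= C%:E * LpG G mu p (fun u => (LDelta u - Ldag u)%R)
      * (expR (2 * Gnorm G y ^+ 2 + fine (LpG G mu 2%:E LDelta) ^+ 2
                 + fine (LpG G mu 2%:E Ldag) ^+ 2))%R%:E)%E.
Proof.
move=> hG [rpos [L0 hL] [M hM] [C0 [C00 hC0]]].
set K := Num.max L0 0.
have K0 : 0 <= K by rewrite le_max lexx orbT.
have hK a b : `|rho a - rho b| <= K * Gnorm G (a - b).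
  apply: le_trans (hL a b) _; apply: ler_wpM2r; first exact: Gnorm_ge0.
  by rewrite le_max lexx.
have M0 : 0 < M := lt_le_trans (rpos 0) (hM 0).
have C0' : 0 <= K * C0 + K * M * C0 ^+ 2.
  by rewrite addr_ge0 // !mulr_ge0 // ?ltW // sqr_ge0.
exists (K * C0 + K * M * C0 ^+ 2 + 1); split; first lra.
move=> X sepX mu Ldag LDelta mdag mDelta fdag fDelta y p p1.
have mphi (L : borel X -> 'rV[R]_d) : rv_measurable L -> measurable_fun setT (fun x => rho (y - L x)).
  move=> mL; apply: (meas_lip G (fun v => rho (y - v)) K L hG K0) => // a b.
  apply: le_trans (hK _ _) _; rewrite sub_sub_vec -GnormN opprB.
  exact: lexx.
have [ZDfin ZDlow] := Z_lower G rho M C0 mu LDelta y hG rpos hM C00 hC0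
  (mphi _ mDelta) mDelta fDelta.
have [Ztfin Ztlow] := Z_lower G rho M C0 mu Ldag y hG rpos hM C00 hC0
  (mphi _ mdag) mdag fdag.
set ZD := (\int[mu]_x (rho (y - LDelta x))%:E)%E in ZDfin ZDlow *.
set Zt := (\int[mu]_x (rho (y - Ldag x))%:E)%E in Ztfin Ztlow *.
set ND := fine (LpG G mu 2%:E LDelta) in ZDlow *.
set Nt := fine (LpG G mu 2%:E Ldag) in Ztlow *.
set W := 2 * Gnorm G y ^+ 2 + ND ^+ 2 + Nt ^+ 2.
have [zD0 izD] := inv_bound _ _ _ C00 ZDlow.
have [zt0 izt] := inv_bound _ _ _ C00 Ztlow.
set zD := fine ZD in zD0 izD *.
set zt := fine Zt in zt0 izt *.
have y0 : 0 <= Gnorm G y ^+ 2 := sqr_ge0 _.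
have ND0 : 0 <= ND ^+ 2 := sqr_ge0 _.
have Nt0 : 0 <= Nt ^+ 2 := sqr_ge0 _.
have izD' : zD^-1 <= C0 * expR W.
  apply: le_trans izD _; apply: ler_wpM2l; first exact: ltW.
  rewrite ler_expR /W; lra.
have izDt : zD^-1 * zt^-1 <= C0 ^+ 2 * expR W.
  have -> : C0 ^+ 2 * expR W =
      (C0 * expR (Gnorm G y ^+ 2 + ND ^+ 2)) * (C0 * expR (Gnorm G y ^+ 2 + Nt ^+ 2)).
    by rewrite mulrACA -expRD /W expr2; congr (_ * expR _); ring.
  by apply: ler_pM => //; rewrite invr_ge0 ltW.
pose D u := Gnorm G (LDelta u - Ldag u).
have mD : measurable_fun setT D.
  by apply: meas_Gnorm; exact: rv_meas_sub.
have D0 u : 0 <= D u by exact: Gnorm_ge0.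
have CW : (0 < (K * C0 + K * M * C0 ^+ 2 + 1) * expR W).
  by rewrite mulr_gt0 ?expR_gt0 //; lra.
set ND_p := LpG G mu p (fun u => LDelta u - Ldag u).
have NDpE : ND_p = Lnorm mu p (fun u => (D u)%:E) by [].
have [NDinf|NDfin] := eqVneq ND_p +oo%E.
  rewrite NDinf gt0_muley ?lte_fin; last by lra.
  by rewrite gt0_mulye ?lte_fin ?expR_gt0 // leey.
have L1D := L1_le_Lp mu p D p1 mD D0.
rewrite -NDpE in L1D.
have NDp0 : (0 <= ND_p)%E by rewrite NDpE Lnorm_ge0.
have NDpfin : ND_p \is a fin_num by rewrite ge0_fin_numE // ltey.
have iD : mu.-integrable setT (EFin \o D).
  apply/integrableP; split; first exact/measurable_EFinP.
  rewrite (_ : (\int[mu]_x _)%E = (\int[mu]_x (D x)%:E)%E).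
    by apply: le_lt_trans L1D _; rewrite ltey.
  by apply: eq_integral => x _ /=; rewrite ger0_norm.
set E := fine (\int[mu]_x (D x)%:E)%E.
have Efin : (\int[mu]_x (D x)%:E)%E \is a fin_num := integrable_fin_num measurableT iD.
have E0 : 0 <= E by rewrite /E fine_ge0 // integral_ge0 // => x _; rewrite lee_fin.
have rb (L : borel X -> 'rV[R]_d) x : `|rho (y - L x)| <= M.
  by rewrite ger0_norm ?hM // ltW.
have iphiD := integrable_bdd mu _ M (mphi _ mDelta) (rb LDelta).
have iphit := integrable_bdd mu _ M (mphi _ mdag) (rb Ldag).
have mdiff : measurable_fun setT (fun x => rho (y - Ldag x) - rho (y - LDelta x)).
  by apply: measurable_funB; apply: mphi.
have hdiff : `|zt - zD| <= K * E.
  have hZ : ((zt - zD)%:E =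
      \int[mu]_x ((rho (y - Ldag x))%:E - (rho (y - LDelta x))%:E))%E.
    by rewrite integralB_EFin // EFinB /zt /zD !fineK.
  rewrite -lee_fin -abse_EFin hZ.
  apply: le_trans (le_abse_integral _ _ _) _ => //.
    by apply/measurable_EFinP; apply: measurable_funB; apply: mphi.
  under eq_integral do rewrite -EFinB abse_EFin.
  apply: (@le_trans _ _ (\int[mu]_x ((K * D x)%:E))%E).
    apply: ge0_le_integral => //.
    - by apply/measurable_EFinP; apply: measurableT_comp => //.
    - by apply/measurable_EFinP; apply: measurable_funM => //; exact: measurable_cst.
    - move=> x _; rewrite lee_fin.
      by have := hK (y - Ldag x) (y - LDelta x); rewrite sub_sub_vec.
  under eq_integral do rewrite EFinM.
  rewrite ge0_integralZl //; try (by apply/measurable_EFinP);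
    try (by move=> x _; rewrite lee_fin); try (by rewrite lee_fin).
  by rewrite -(fineK Efin) -EFinM.
set al := K * C0 * expR W.
set be := K * M * C0 ^+ 2 * expR W.
have al0 : 0 <= al by rewrite !mulr_ge0 ?expR_ge0 // ltW.
have be0 : 0 <= be by rewrite !mulr_ge0 ?expR_ge0 ?sqr_ge0 // ltW.
have pt u : `|post_density mu rho LDelta y u - post_density mu rho Ldag y u|
    <= al * D u + be * E.
  rewrite /post_density -/ZD -/Zt -/zD -/zt.
  set a := rho (y - LDelta u); set b := rho (y - Ldag u).
  have ha : `|a - b| <= K * D u.
    by have := hK (y - LDelta u) (y - Ldag u); rewrite sub_sub_vec -[Ldag u - LDelta u]opprB GnormN.
  have b0 : 0 <= b by exact: ltW (rpos _).
  have bM : b <= M by exact: hM.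
  have -> : a / zD - b / zt = (a - b) * zD^-1 + b * (zt - zD) * (zD^-1 * zt^-1).
    by field; rewrite !gt_eqF.
  apply: le_trans (ler_normD _ _) _.
  have izD0 : 0 <= zD^-1 by rewrite invr_ge0 ltW.
  have izt0 : 0 <= zt^-1 by rewrite invr_ge0 ltW.
  rewrite !normrM (ger0_norm b0) (ger0_norm izD0) (ger0_norm izt0).
  apply: lerD.
    have -> : al * D u = (K * D u) * (C0 * expR W) by rewrite /al; ring.
    by apply: ler_pM.
  have -> : be * E = (M * (K * E)) * (C0 ^+ 2 * expR W) by rewrite /be; ring.
  apply: ler_pM => //; first by rewrite mulr_ge0.
    exact: mulr_ge0.
  by apply: ler_pM.
have mpD (L : borel X -> 'rV[R]_d) : rv_measurable L ->
    measurable_fun setT (fun u => post_density mu rho L y u).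
  by move=> mL; apply: measurable_funM; [exact: mphi|exact: measurable_cst].
have mlhs : measurable_fun setT
    (fun u => `|post_density mu rho LDelta y u - post_density mu rho Ldag y u|).
  apply: (measurableT_comp (@normr_measurable R setT)).
  by apply: measurable_funB; apply: mpD.
have maD : measurable_fun setT (fun u => al * D u).
  by apply: measurable_funM => //; exact: measurable_cst.
have mbE : measurable_fun setT (fun _ : borel X => be * E).
  exact: measurable_cst.
have ptw u : `| `|post_density mu rho LDelta y u - post_density mu rho Ldag y u| |
    <= `|al * D u + be * E|.
  have gnn : 0 <= al * D u + be * E by rewrite addr_ge0 // mulr_ge0.
  by rewrite normr_id (ger0_norm gnn); exact: pt.
have step1 := Lnorm_mono mu p _ _ p1 mlhs (measurable_funD maD mbE) ptw.
have step2 : (Lnorm mu p (fun u => (al * D u + be * E)%:E) <=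
    Lnorm mu p (fun u => (al * D u)%:E) + Lnorm mu p (fun u => (be * E)%:E))%E.
  exact: (eminkowski mu maD mbE p1).
rewrite Lnorm_scale // (Lnorm_cst mu p (be * E) p1 (mulr_ge0 be0 E0)) in step2.
have n0 : 0 <= fine ND_p by rewrite fine_ge0.
have En : E <= fine ND_p.
  by rewrite -lee_fin (fineK NDpfin) /E (fineK Efin).
apply: le_trans step1 _; apply: le_trans step2 _.
rewrite -NDpE -(fineK NDpfin) -EFinM -EFinD -!EFinM lee_fin.
have eW : 0 < expR W by exact: expR_gt0.
have -> : al * fine ND_p + be * E =
    (K * C0 + K * M * C0 ^+ 2) * expR W * fine ND_p - be * (fine ND_p - E).
  by rewrite /al /be; ring.
have h1 : 0 <= be * (fine ND_p - E) by rewrite mulr_ge0 // subr_ge0.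
have h2 : (K * C0 + K * M * C0 ^+ 2) * expR W * fine ND_p
    <= (K * C0 + K * M * C0 ^+ 2 + 1) * fine ND_p * expR W.
  rewrite mulrAC; apply: ler_wpM2r; first exact: ltW.
  by apply: ler_wpM2r => //; lra.
lra.
Qed.
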